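(* The topes of any $(n,d)$-pre-trianguloid are pairwise compatible. Consequently, a collection of topes $\{T_v\}$ indexed by the lattice points $v$ of $n\Delta^{d-1}$ is a pre-trianguloid if and only if it is an extended $(n,d)$-tope arrangement.
   Context: Fix positive integers $n,d$; graphs are subgraphs of the complete bipartite graph with left vertices $[n]$ and right vertices $[\bar d]=\{\bar1,\dots,\bar d\}$. $RD(G)$ is the vector of right-vertex degrees; lattice points of $n\Delta^{d-1}$ are vectors in $\mathbb Z_{\ge0}^{[\bar d]}$ with sum $n$; $e_{\bar j}$ is a unit vector. Two acyclic graphs are compatible if whenever both contain a perfect matching between the same $I\subseteq[n]$, $\bar J\subseteq[\bar d]$, these matchings coincide. A tope is a map $T:[n]\to[\bar d]$ (graph $\{(i,T(i))\}$). An extended $(n,d)$-tope arrangement is a collection of pairwise compatible topes $T_v$, one for each lattice point $v$ of $n\Delta^{d-1}$, with $RD(T_v)=v$. An $(n,d)$-pre-trianguloid is a collection of topes $T_v$, one for each lattice point $v$ of $n\Delta^{d-1}$, with $RD(T_v)=v$, such that whenever $v-e_{\bar j}=v'-e_{\bar j'}$ for lattice points $v,v'$ and $\bar j,\bar j'\in[\bar d]$, we have $T_{v'}^{-1}(\bar j)\subseteq T_v^{-1}(\bar j)$. *)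

(* Defs.v *)
From mathcomp Require Import all_boot.
Set Implicit Arguments. Unset Strict Implicit. Unset Printing Implicit Defensive.

(* Left vertices [n] = 'I_n, right vertices [\bar d] = 'I_d.
   A graph is a subgraph of K_{n,d}: a set of edges (i, \bar j). *)
Definition graph (n d : nat) := {set 'I_n * 'I_d}.

Definition perfect_matching n d (M : graph n d) (I : {set 'I_n}) (J : {set 'I_d}) : Prop :=
  (forall e, e \in M -> (e.1 \in I) && (e.2 \in J)) /\
  (forall i, i \in I -> #|[set j | (i, j) \in M]| = 1) /\
  (forall j, j \in J -> #|[set i | (i, j) \in M]| = 1).

Definition compatible n d (G1 G2 : graph n d) : Prop :=
  forall (I : {set 'I_n}) (J : {set 'I_d}) (M1 M2 : graph n d),
    M1 \subset G1 -> M2 \subset G2 ->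
    perfect_matching M1 I J -> perfect_matching M2 I J -> M1 = M2.

Definition tope (n d : nat) := {ffun 'I_n -> 'I_d}.
Definition tope_graph n d (T : tope n d) : graph n d := [set (i, T i) | i : 'I_n].

Definition RD n d (T : tope n d) : {ffun 'I_d -> nat} :=
  [ffun j => #|[set i | T i == j]|].

Definition lattice_point (n d : nat) (v : {ffun 'I_d -> nat}) : Prop :=
  \sum_(j < d) v j = n.

Definition unitv d (j : 'I_d) : {ffun 'I_d -> nat} := [ffun k => (k == j) : nat].

(* A collection of topes indexed by lattice points is modelled as a function
   on all of Z_{>=0}^d; only its values at lattice points matter. *)
Definition tope_family (n d : nat) := {ffun 'I_d -> nat} -> tope n d.

Definition pre_trianguloid n d (T : tope_family n d) : Prop :=
  (forall v, lattice_point n v -> RD (T v) = v) /\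
  (forall v v' (j j' : 'I_d), lattice_point n v -> lattice_point n v' ->
     (* v - e_j = v' - e_j'  (as integer vectors), i.e. v + e_j' = v' + e_j *)
     (forall k, v k + unitv j' k = v' k + unitv j k) ->
     [set i | T v' i == j] \subset [set i | T v i == j]).

Definition extended_tope_arrangement n d (T : tope_family n d) : Prop :=
  (forall v, lattice_point n v -> RD (T v) = v) /\
  (forall v v', lattice_point n v -> lattice_point n v' ->
     compatible (tope_graph (T v)) (tope_graph (T v'))).

(* Main.v *)
Require Import Defs.
From mathcomp Require Import all_boot zify.
Set Implicit Arguments. Unset Strict Implicit. Unset Printing Implicit Defensive.

Definition wit {n d} (L : {set 'I_n}) (A B : tope n d) :=
  exists S : {set 'I_n}, [/\ S \subset L, S != set0,
    (forall i, i \in S -> A i != B i) & A @: S \subset B @: S].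

Lemma minwit {n d} (L : {set 'I_n}) (A B : tope n d) : wit L A B ->
  exists S : {set 'I_n}, [/\ S \subset L, S != set0,
    (forall i, i \in S -> A i != B i), A @: S = B @: S &
    {in S &, injective A} /\ {in S &, injective B}].
Proof.
case=> S0 [sL ne df sub].
have := leqnn #|S0|; move: {2}#|S0| => N.
elim: N S0 sL ne df sub => [|N IH] S sL ne df sub hc.
  by move: ne; rewrite -card_gt0; case: #|S| hc.
have lt i : i \in S -> #|S :\ i| <= N.
  by move=> iS; move: hc; rewrite (cardsD1 i) iS.
have sL' i : S :\ i \subset L by apply: subset_trans sL; apply: subsetDl.
have df' i : forall j, j \in S :\ i -> A j != B j.
  by move=> j /setD1P [_ /df].
case: (boolP [exists i in S, B i \notin A @: S]) => [/exists_inP [i iS nB]|].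
  apply: (IH (S :\ i) (sL' i) _ (df' i) _ (lt i iS)).
    have /imsetP [i' i'S eq'] : A i \in B @: S by apply: (subsetP sub); apply: imset_f.
    apply/set0Pn; exists i'; rewrite !inE i'S andbT.
    by apply/eqP => ii; move: (df _ iS); rewrite eq' ii eqxx.
  apply/subsetP => y /imsetP [j /setD1P [ji jS] ->].
  have /imsetP [i' i'S eq'] : A j \in B @: S by apply: (subsetP sub); apply: imset_f.
  rewrite eq'; apply: imset_f; rewrite !inE i'S andbT.
  by apply/eqP => ii; move: nB; rewrite -ii -eq' imset_f.
move=> /exists_inPn allB.
have eqS : A @: S = B @: S.
  apply/eqP; rewrite eqEsubset sub /=.
  by apply/subsetP => y /imsetP [j jS ->]; move: (allB j jS); rewrite negbK.
case: (boolP [exists i in S, B i \in B @: (S :\ i)]) => [/exists_inP [i iS iB]|].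
  apply: (IH (S :\ i) (sL' i) _ (df' i) _ (lt i iS)).
    by apply/set0Pn; case/imsetP: iB => j jS _; exists j.
  apply/subsetP => y /imsetP [j /setD1P [ji jS] ->].
  have /imsetP [i' i'S eq'] : A j \in B @: S by rewrite -eqS imset_f.
  rewrite eq'; case: (eqVneq i' i) => [->//|ne'].
  by apply: imset_f; rewrite !inE ne'.
move=> /exists_inPn allI.
have injB : {in S &, injective B}.
  move=> i j iS jS eqij; apply/eqP; apply: contraT => ne'.
  by move: (allI j jS); rewrite -eqij imset_f // !inE ne' iS.
have injA : {in S &, injective A}.
  apply/imset_injP; rewrite eqS; exact/imset_injP.
by exists S; split.
Qed.

Lemma in_graph {n d} (A : tope n d) i j : ((i, j) \in tope_graph A) = (j == A i).
Proof.
apply/imsetP/eqP => [[i' _ [-> ->]] //|->]; by exists i.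
Qed.

Lemma pm_eq {n d} (A : tope n d) (M : graph n d) I J :
  M \subset tope_graph A -> perfect_matching M I J ->
  M = [set e | (e.1 \in I) && (e.2 == A e.1)].
Proof.
move=> sM [p1 [p2 p3]]; apply/setP => [[i j]]; rewrite inE /=.
apply/idP/andP => [iM|[iI /eqP ->]].
  by have /andP [-> _] := p1 _ iM; move: (subsetP sM _ iM); rewrite in_graph.
have := p2 i iI; move/eqP/cards1P => [j' hj'].
have : j' \in [set j | (i, j) \in M] by rewrite hj' set11.
rewrite inE => hM; move: (subsetP sM _ hM); rewrite in_graph => /eqP <-//.
Qed.

Lemma card1_eq (T : finType) (X : {set T}) a b : #|X| = 1 -> a \in X -> b \in X -> a = b.
Proof. by move/eqP/cards1P=> [c ->]; rewrite !inE => /eqP-> /eqP->. Qed.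

Lemma nowit_compat {n d} (A B : tope n d) :
  ~ wit setT A B -> compatible (tope_graph A) (tope_graph B).
Proof.
move=> nw I J M1 M2 s1 s2 pm1 pm2.
apply/eqP; apply: contraT => neq; case: nw.
have e1 := pm_eq s1 pm1; have e2 := pm_eq s2 pm2.
case: pm1 => [q1 [q2 q3]]; case: pm2 => [r1 [r2 r3]].
exists [set i in I | A i != B i]; split.
- exact: subsetT.
- apply: contra neq => /eqP h0; rewrite e1 e2; apply/eqP/setP => [[i j]]; rewrite !inE /=.
  case iI: (i \in I) => //=; have : i \notin [set i in I | A i != B i] by rewrite h0 inE.
  by rewrite !inE iI /= negbK => /eqP ->.
- by move=> i; rewrite inE => /andP [].
apply/subsetP => y /imsetP [i]; rewrite inE => /andP [iI nAB] ->.
have iM1 : (i, A i) \in M1 by rewrite e1 inE /= iI eqxx.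
have /andP [_ jJ] := q1 _ iM1; rewrite /= in jJ.
have := r3 _ jJ; move/eqP/cards1P => [i' hi'].
have : i' \in [set i0 | (i0, A i) \in M2] by rewrite hi' set11.
rewrite inE e2 inE /= => /andP [i'I /eqP hB].
rewrite hB; apply: imset_f; rewrite inE i'I /=.
apply/negP => /eqP hAB.
have ii : i = i'.
  apply: (card1_eq (q3 _ jJ)); rewrite inE //.
  by rewrite e1 inE /= i'I hAB hB eqxx.
by move: nAB; rewrite ii hAB eqxx.
Qed.

Lemma compat_nowit {n d} (A B : tope n d) :
  compatible (tope_graph A) (tope_graph B) -> ~ wit setT A B.
Proof.
move=> cp /minwit [S [_ ne df eqS [iA iB]]].
have pmA (C : tope n d) : {in S &, injective C} ->
   perfect_matching [set (i, C i) | i in S] S (C @: S).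
  move=> iC; split; [|split].
  - by move=> e /imsetP [i iS ->] /=; rewrite iS imset_f.
  - move=> i iS; apply/eqP/cards1P; exists (C i); apply/setP => j; rewrite !inE.
    apply/imsetP/eqP => [[i' _ [-> ->]] //|->]; by exists i.
  - move=> j /imsetP [i0 i0S ->]; apply/eqP/cards1P; exists i0; apply/setP => i; rewrite !inE.
    apply/imsetP/eqP => [[i' i'S [-> h]]|->]; last by exists i0.
    by apply: iC.
have sub (C : tope n d) : [set (i, C i) | i in S] \subset tope_graph C.
  by apply/subsetP => e /imsetP [i _ ->]; rewrite in_graph.
have := cp S (A @: S) _ _ (sub A) (sub B) (pmA A iA).
rewrite eqS => /(_ (pmA B iB)) heq.
case/set0Pn: ne => i iS; move: (df i iS).
have : (i, A i) \in [set (i, B i) | i in S] by rewrite -heq imset_f.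
by case/imsetP => i' _ [-> ->]; rewrite eqxx.
Qed.

Definition up {d} (x : {ffun 'I_d -> nat}) (k : 'I_d) : {ffun 'I_d -> nat} :=
  [ffun m => x m + (m == k)].
Definition latL {n d} (L : {set 'I_n}) (v : {ffun 'I_d -> nat}) := \sum_(j < d) v j = #|L|.
Definition cnt {n d} (L : {set 'I_n}) (A : tope n d) r := #|[set i in L | A i == r]|.
Definition pretri {n d} (L : {set 'I_n}) (T : tope_family n d) :=
  (forall v, latL L v -> forall r, cnt L (T v) r = v r) /\
  (forall v v' (j j' : 'I_d), latL L v -> latL L v' ->
     (forall k, v k + unitv j' k = v' k + unitv j k) ->
     [set i in L | T v' i == j] \subset [set i in L | T v i == j]).

Lemma sum_up {d} (x : {ffun 'I_d -> nat}) k :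
  \sum_(j < d) up x k j = \sum_(j < d) x j + 1.
Proof.
under eq_bigr do rewrite ffunE.
rewrite big_split /=; congr (_ + _).
rewrite (bigD1 k) //= eqxx big1 ?addn0 // => j /negbTE ->//.
Qed.

Lemma latL_up {n d} (L : {set 'I_n}) (x : {ffun 'I_d -> nat}) k :
  \sum_(j < d) x j + 1 = #|L| -> latL L (up x k).
Proof. by rewrite /latL sum_up. Qed.

Lemma star {n d} (L : {set 'I_n}) (T : tope_family n d) (x : {ffun 'I_d -> nat}) m r :
  pretri L T -> \sum_(j < d) x j + 1 = #|L| ->
  [set i in L | T (up x m) i == r] \subset [set i in L | T (up x r) i == r].
Proof.
move=> [_ ax] hx; apply: ax; try exact: latL_up.
by move=> k; rewrite /unitv !ffunE addnAC.
Qed.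

Lemma cnt_up {n d} (L : {set 'I_n}) (T : tope_family n d) (x : {ffun 'I_d -> nat}) m r :
  pretri L T -> \sum_(j < d) x j + 1 = #|L| ->
  cnt L (T (up x m)) r = x r + (r == m).
Proof. by move=> [rd _] hx; rewrite rd ?ffunE //; exact: latL_up. Qed.

Lemma Kstar {n d} (L : {set 'I_n}) (T : tope_family n d) (x : {ffun 'I_d -> nat}) m p :
  pretri L T -> \sum_(j < d) x j + 1 = #|L| -> p \in L ->
  T (up x (T (up x m) p)) p = T (up x m) p.
Proof.
move=> pt hx pL.
have := subsetP (star m (T (up x m) p) pt hx) p.
by rewrite !inE pL eqxx => /(_ isT) /eqP.
Qed.

Lemma sumJ {n d} (L : {set 'I_n}) (C : tope n d) (J : {set 'I_d}) :
  #|[set i in L | C i \in J]| = \sum_(r in J) cnt L C r.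
Proof.
rewrite -sum1_card (partition_big C (mem J)) /=; last by move=> i; rewrite inE => /andP[].
apply: eq_bigr => r rJ; rewrite /cnt -sum1_card; apply: eq_bigl => i; rewrite !inE.
by case: eqP => [->|]; rewrite ?rJ ?andbT ?andbF.
Qed.

Lemma noJ {n d} (L : {set 'I_n}) (T : tope_family n d) (x : {ffun 'I_d -> nat}) k k' (J : {set 'I_d}) :
  pretri L T -> \sum_(j < d) x j + 1 = #|L| -> k \notin J -> k' \in J ->
  (forall r, r \in J -> exists i0, [/\ i0 \in L, T (up x r) i0 == r,
        T (up x k) i0 != r & T (up x k) i0 \in J]) -> False.
Proof.
move=> pt hx kJ k'J cl.
set P := T (up x k); set Q := T (up x k').
have uniq r i i0 : r != k -> i \in L -> i0 \in L -> T (up x r) i == r ->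
    T (up x r) i0 == r -> P i != r -> P i0 != r -> i = i0.
  move=> rk iL i0L h1 h2 h3 h4.
  have sub := star k r pt hx.
  have c1 : #|[set i in L | T (up x r) i == r] :\: [set i in L | P i == r]| = 1.
    rewrite cardsD (setIidPr sub).
    have := cnt_up k r pt hx; have := cnt_up r r pt hx; rewrite /cnt eqxx (negbTE rk).
    by move=> -> ->; lia.
  by apply: (card1_eq c1); rewrite !inE ?iL ?i0L ?h1 ?h2 ?h3 ?h4.
have eP : #|[set i in L | P i \in J]| = \sum_(r in J) x r.
  rewrite sumJ; apply: eq_bigr => r rJ; rewrite (cnt_up k r pt hx).
  by case: eqP rJ kJ => [->->//|]; rewrite addn0.
have eQ : #|[set i in L | Q i \in J]| = \sum_(r in J) x r + 1.
  rewrite sumJ; under eq_bigr => r rJ do rewrite (cnt_up k' r pt hx).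
  rewrite big_split /=; congr (_ + _); rewrite (bigD1 k') //= eqxx big1 ?addn0 // => j /andP [_ /negbTE ->]//.
have sub : [set i in L | Q i \in J] \subset [set i in L | P i \in J].
  apply/subsetP => i; rewrite !inE => /andP [iL QJ]; rewrite iL /=.
  have := subsetP (star k' (Q i) pt hx) i; rewrite !inE iL eqxx => /(_ isT) hA.
  case: (eqVneq (P i) (Q i)) => [->//|nP].
  have [i0 [i0L h1 h2 h3]] := cl _ QJ.
  have rk : Q i != k by apply: contraNneq kJ => <-.
  by rewrite (uniq _ _ _ rk iL i0L hA h1 nP h2).
by have := subset_leq_card sub; rewrite eP eQ; lia.
Qed.

Lemma indep {n d} (L : {set 'I_n}) (T : tope_family n d) (x : {ffun 'I_d -> nat}) p k k' :
  pretri L T -> \sum_(j < d) x j + 1 = #|L| -> p \in L ->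
  T (up x k) p = k -> T (up x k') p = k' ->
  forall i, i \in L -> i != p -> T (up x k) i = T (up x k') i.
Proof.
move=> pt hx pL hk hk' q qL qp; apply/eqP; apply/negPn/negP => nq.
case: (eqVneq k k') => [ekk|nkk]; first by move: nq; rewrite ekk eqxx.
set v := up x k; set w := up x k'.
pose D := [set i in L | (i != p) && (T v i != T w i)].
have qD : q \in D by rewrite !inE qL qp.
apply: (@noJ n d L T x k (T w q) (T w @: D) pt hx).
- apply/imsetP => [[i iD eqk]].
  move: iD; rewrite !inE => /and3P [iL ip nd].
  have hax : [set i in L | T w i == k] \subset [set i in L | T v i == k].
    apply: (proj2 pt) => //; try exact: latL_up.
    by move=> m; rewrite !ffunE addnAC.
  have := subsetP hax i; rewrite !inE iL -eqk eqxx => /(_ isT) /eqP eqv.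
  by move: nd; rewrite eqv -eqk eqxx.
- by apply: imset_f.
- move=> r /imsetP [i0 i0D ->]; exists i0.
  move: (i0D); rewrite !inE => /and3P [i0L i0p nd]; split => //.
  + have := subsetP (star k' (T w i0) pt hx) i0; rewrite !inE i0L eqxx.
    by move=> /(_ isT).
  + set s := T v i0; apply: contraT => sD.
    pose Fv := [set i in L | T v i == s]; pose Fw := [set i in L | T w i == s].
    have sub : Fw :\ p \subset (Fv :\ p) :\ i0.
      apply/subsetP => i; rewrite !inE => /and3P [ip iL /eqP ws].
      have iD : i \notin D by apply: contra sD => iD; rewrite -ws imset_f.
      move: iD; rewrite !inE iL ip /= negbK => /eqP vw.
      rewrite vw ws eqxx andbT; apply/eqP => ii; move: nd; rewrite -ii vw eqxx //.
    have cv := cnt_up k s pt hx; have cw := cnt_up k' s pt hx.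
    rewrite /cnt -/v -/w -/Fv -/Fw in cv cw.
    move: cv cw (subset_leq_card sub).
    rewrite (cardsD1 p Fv) (cardsD1 p Fw) (cardsD1 i0 (Fv :\ p)) !inE pL hk hk' i0p i0L eqxx /=.
    rewrite [s == k]eq_sym [s == k']eq_sym.
    move: (k == s) (k' == s) #|Fv :\ p :\ i0| #|Fw :\ p| => b1 b2 a1 a2 h1 h2 h3.
    rewrite [x s + b1]addnC in h1; rewrite [x s + b2]addnC in h2.
    move/addnI in h1; move/addnI in h2.
    by move: h3; rewrite h2 -h1 add1n ltnn.
Qed.

Definition delT {n d} (T : tope_family n d) (p : 'I_n) (k0 : 'I_d) : tope_family n d :=
  fun x => T (up x (T (up x k0) p)).

Lemma del_agree {n d} (L : {set 'I_n}) (T : tope_family n d) (x : {ffun 'I_d -> nat}) p k0 c :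
  pretri L T -> \sum_(j < d) x j + 1 = #|L| -> p \in L -> T (up x c) p = c ->
  forall i, i \in L -> i != p -> delT T p k0 x i = T (up x c) i.
Proof.
move=> pt hx pL hc i iL ip; rewrite /delT.
apply: (indep pt hx pL _ hc iL ip). exact: (Kstar k0 pt hx pL).
Qed.

Lemma setD1_sep {n} (L : {set 'I_n}) p (P : pred 'I_n) :
  [set i in L :\ p | P i] = [set i in L | P i] :\ p.
Proof. by apply/setP => i; rewrite !inE andbA. Qed.

Lemma del_pretri {n d} (L : {set 'I_n}) (T : tope_family n d) p k0 :
  pretri L T -> p \in L -> pretri (L :\ p) (delT T p k0).
Proof.
move=> pt pL.
have hL : #|L| = #|L :\ p| + 1 by rewrite (cardsD1 p L) pL addnC.
have hx (x : {ffun 'I_d -> nat}) : latL (L :\ p) x -> \sum_(j < d) x j + 1 = #|L|.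
  by rewrite /latL hL => ->.
split.
- move=> x /hx hx1 r; rewrite /delT.
  set c := T (up x k0) p.
  have hc : T (up x c) p = c by exact: (Kstar k0 pt hx1 pL).
  have := cnt_up c r pt hx1; rewrite /cnt setD1_sep (cardsD1 p [set i in L | _]) !inE pL hc /=.
  by rewrite [c == r]eq_sym addnC => /addIn.
- move=> x x' j j' /hx hx1 /hx hx2 hyp.
  case: (eqVneq j j') => [ejj|njj].
    have -> : x = x'.
      by apply/ffunP => m; have := hyp m; rewrite ejj => /addIn.
    exact: subxx.
  set c := T (up x j') p.
  have e : up x j' = up x' j.
    by apply/ffunP => m; rewrite !ffunE; have := hyp m; rewrite /unitv !ffunE.
  have c1 : T (up x c) p = c by exact: (Kstar j' pt hx1 pL).
  have c2 : T (up x' c) p = c by rewrite /c e; exact: (Kstar j pt hx2 pL).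
  have ax : [set i in L | T (up x' c) i == j] \subset [set i in L | T (up x c) i == j].
    apply: ((proj2 pt) (up x c) (up x' c) j j'); try exact: latL_up.
    move=> m; rewrite /unitv !ffunE addnAC [in RHS]addnAC.
    by have := hyp m; rewrite /unitv !ffunE => ->.
  apply/subsetP => i; rewrite !inE => /andP [/andP [ip iL] hi].
  rewrite ip iL /= (del_agree k0 pt hx1 pL c1 iL ip).
  move: hi; rewrite (del_agree k0 pt hx2 pL c2 iL ip) => hi.
  by have := subsetP ax i; rewrite !inE iL hi => /(_ isT).
Qed.

Lemma cnt_inj {n d} (S : {set 'I_n}) (A : tope n d) r :
  {in S &, injective A} -> #|[set i in S | A i == r]| = (r \in A @: S).
Proof.
move=> iA; case: (boolP (r \in A @: S)) => [/imsetP [i0 i0S ->]|nr].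
  apply/eqP/cards1P; exists i0; apply/setP => i; rewrite !inE.
  apply/andP/eqP => [[iS /eqP]|->]; last by rewrite i0S eqxx.
  by move/iA; apply.
apply/eqP; rewrite cards_eq0; apply/eqP/setP => i; rewrite !inE.
apply/negP => /andP [iS /eqP ei]; move: nr; rewrite -ei imset_f //.
Qed.

Lemma main_gen {n d} N : forall (L : {set 'I_n}), #|L| = N -> forall (T : tope_family n d),
  pretri L T -> forall v w, latL L v -> latL L w -> ~ wit L (T v) (T w).
Proof.
elim: N => [|N IH] L hL T pt v w lv lw.
  case=> S [sL ne _ _]; move: hL => /eqP; rewrite cards_eq0 => /eqP L0.
  by case/set0Pn: ne => i iS; have := subsetP sL i iS; rewrite L0 inE.
move/minwit => [S [sL ne df eqS [iA iB]]].
case: (boolP (L \subset S)) => [LS | /subsetPn [p pL pS]].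
  have eLS : L = S by apply/eqP; rewrite eqEsubset LS sL.
  have evw : v = w.
    apply/ffunP => r; rewrite -(proj1 pt v lv r) -(proj1 pt w lw r) /cnt eLS.
    by rewrite !cnt_inj // eqS.
  by case/set0Pn: ne => i iS; move: (df i iS); rewrite evw eqxx.
pose T' := delT T p (T v p).
have pt' : pretri (L :\ p) T' by apply: del_pretri.
have hL' : #|L :\ p| = N by move: hL; rewrite (cardsD1 p L) pL add1n => -[].
have down (u : {ffun 'I_d -> nat}) : latL L u ->
  exists xu : {ffun 'I_d -> nat}, [/\ latL (L :\ p) xu, \sum_(j < d) xu j + 1 = #|L|,
     up xu (T u p) = u & forall i, i \in L :\ p -> T' xu i = T u i].
  move=> lu.
  pose xu : {ffun 'I_d -> nat} := [ffun m => u m - (m == T u p)].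
  have pos : 0 < u (T u p).
    rewrite -(proj1 pt u lu) /cnt card_gt0; apply/set0Pn; exists p; by rewrite !inE pL eqxx.
  have e : up xu (T u p) = u.
    apply/ffunP => m; rewrite !ffunE; case: eqP => [->|_]; rewrite ?subn0 ?addn0 //.
    by rewrite subnK.
  have hx : \sum_(j < d) xu j + 1 = #|L| by rewrite -(sum_up xu (T u p)) e.
  exists xu; split => //.
    by rewrite /latL; move: hx; rewrite (cardsD1 p L) pL /= add1n addn1 => -[].
  move=> i; rewrite !inE => /andP [ip iL].
  have hc : T (up xu (T u p)) p = T u p by rewrite e.
  by rewrite /T' (del_agree (T v p) pt hx pL hc iL ip) e.
have [xv [lxv _ _ av]] := down v lv.
have [xw [lxw _ _ aw]] := down w lw.
apply: (IH (L :\ p) hL' T' pt' xv xw lxv lxw).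
have sS : S \subset L :\ p.
  apply/subsetP => i iS; rewrite !inE (subsetP sL i iS) andbT.
  by apply: contraNneq pS => <-.
exists S; split => //.
- by move=> i iS; have iS2 := subsetP sS i iS; rewrite av // aw //; apply: df.
- have -> : T' xv @: S = T v @: S.
    by apply: eq_in_imset => i iS; apply: av; apply: (subsetP sS).
  have -> : T' xw @: S = T w @: S.
    by apply: eq_in_imset => i iS; apply: aw; apply: (subsetP sS).
  by rewrite eqS.
Qed.

Lemma latT n {d} (v : {ffun 'I_d -> nat}) : lattice_point n v <-> latL [set: 'I_n] v.
Proof. by rewrite /latL /lattice_point cardsT card_ord. Qed.

Lemma pre_to_pretri {n d} (T : tope_family n d) : pre_trianguloid T -> pretri [set: 'I_n] T.
Proof.
move=> [rd ax]; split.
- move=> v /(latT n) lv r; have := rd v lv; move/ffunP/(_ r); rewrite ffunE => <-.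
  by rewrite /cnt; apply: eq_card => i; rewrite !inE.
- move=> v v' j j' /(latT n) lv /(latT n) lv' hyp.
  have := ax v v' j j' lv lv' hyp.
  have e (A : tope n d) : [set i in [set: 'I_n] | A i == j] = [set i | A i == j].
    by apply/setP => i; rewrite !inE.
  by rewrite !e.
Qed.

Theorem mainTheorem7 (n d : nat) (hn : 0 < n) (hd : 0 < d) :
  (forall T : tope_family n d, pre_trianguloid T ->
     forall v v', lattice_point n v -> lattice_point n v' ->
       compatible (tope_graph (T v)) (tope_graph (T v'))) /\
  (forall T : tope_family n d,
     pre_trianguloid T <-> extended_tope_arrangement T).
Proof.
have part1 : forall T : tope_family n d, pre_trianguloid T ->
     forall v v', lattice_point n v -> lattice_point n v' ->
       compatible (tope_graph (T v)) (tope_graph (T v')).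
  move=> T pre v v' /(latT n) lv /(latT n) lv'; apply: nowit_compat.
  exact: (main_gen (erefl _) (pre_to_pretri pre) lv lv').
split => // T; split.
  by move=> pre; split; [exact: (proj1 pre) | exact: part1].
move=> [rd cp]; split => // v v' j j' lv lv' hyp.
apply/subsetP => i0; rewrite !inE => hi0; apply/negPn/negP => ni0.
apply: (compat_nowit (cp v v' lv lv')).
pose D := [set i | T v i != T v' i].
have i0D : i0 \in D by rewrite inE (eqP hi0).
exists D; split.
- exact: subsetT.
- by apply/set0Pn; exists i0.
- by move=> i; rewrite inE.
apply/subsetP => y /imsetP [i iD ->].
case: (eqVneq (T v i) j) => [->|sj].
  by rewrite -(eqP hi0); apply: imset_f.
apply/negPn/negP => sD.
pose s := T v i.
pose F := [set i | T v i == s]; pose F' := [set i | T v' i == s].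
have sub : F' \subset F :\ i.
  apply/subsetP => i'; rewrite !inE => /eqP ws.
  have : i' \notin D by apply: contra sD => i'D; rewrite -/s -ws imset_f.
  rewrite inE negbK => /eqP vw; rewrite vw ws eqxx andbT.
  apply/eqP => ii; move: iD; rewrite inE -ii vw ws eqxx //.
have cF : #|F| = v s by have := rd v lv; move/ffunP/(_ s); rewrite ffunE.
have cF' : #|F'| = v' s by have := rd v' lv'; move/ffunP/(_ s); rewrite ffunE.
have := subset_leq_card sub; rewrite cF'.
have h1 : v s = 1 + #|F :\ i| by rewrite -cF (cardsD1 i F) !inE eqxx.
have h2 : v s <= v' s.
  by have := hyp s; rewrite /unitv !ffunE (negbTE sj) addn0 => <-; apply: leq_addr.
by move=> h3; have := leq_trans h2 h3; rewrite h1 add1n ltnn.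
Qed.
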